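(* Let $\theta\in(0,\pi)$, $\lambda_0=2\cos\theta$, $\sigma\in[0,1]$, $c_0\ge1$, and let $(\omega_i)_{i\ge1}$ be real numbers with $|\omega_i|\le c_0$ for all $i$. Then for all $k\ge0$, $$\frac{|X_{k+1}-X_k|}{Y_k}\le \frac{\sqrt5}{2}\,\frac{\sigma c_0^2}{\sin^2\theta}.$$
   Context: Let $z=e^{i\theta}$, $T_i=\begin{pmatrix}\lambda_0-\sigma\omega_i&-1\\1&0\end{pmatrix}$, $W_k=T_k\cdots T_1$ ($W_0=I$), and define $X_k,Y_k\in\mathbb{R}$, $Y_k>0$, by $X_k+iY_k=W_k^{-1}\circ z$, where a real $2\times2$ matrix $\begin{pmatrix}a&b\\c&d\end{pmatrix}$ of positive determinant acts on the upper half plane by $w\mapsto\frac{aw+b}{cw+d}$. *)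

(* Defs.v *)
From Stdlib Require Import Reals Lra.
Open Scope R_scope.

Record mat2 := Mat2 { ma : R; mb : R; mc : R; md : R }.

Definition mmul (M N : mat2) : mat2 :=
  Mat2 (ma M * ma N + mb M * mc N) (ma M * mb N + mb M * md N)
       (mc M * ma N + md M * mc N) (mc M * mb N + md M * md N).

Definition mid : mat2 := Mat2 1 0 0 1.

Definition mdet (M : mat2) : R := ma M * md M - mb M * mc M.

Definition minv (M : mat2) : mat2 :=
  let d := mdet M in Mat2 (md M / d) (- mb M / d) (- mc M / d) (ma M / d).

(* Moebius action w |-> (a w + b)/(c w + d) on w = x + i y, written on
   (real part, imaginary part) pairs. *)
Definition mact (M : mat2) (w : R * R) : R * R :=
  let (x, y) := w in
  let nr := ma M * x + mb M in let ni := ma M * y in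
  let dr := mc M * x + md M in let di := mc M * y in
  let q := dr * dr + di * di in
  ((nr * dr + ni * di) / q, (ni * dr - nr * di) / q).

Definition Tm (lam0 sigma : R) (omega : nat -> R) (i : nat) : mat2 :=
  Mat2 (lam0 - sigma * omega i) (-1) 1 0.

Fixpoint Wm (lam0 sigma : R) (omega : nat -> R) (k : nat) : mat2 :=
  match k with
  | O => mid
  | S k' => mmul (Tm lam0 sigma omega (S k')) (Wm lam0 sigma omega k')
  end.

(* X_k + i Y_k = W_k^{-1} o z, z = e^{i theta}, lambda0 = 2 cos theta. *)
Definition XY (theta sigma : R) (omega : nat -> R) (k : nat) : R * R :=
  mact (minv (Wm (2 * cos theta) sigma omega k)) (cos theta, sin theta).

Definition Xk theta sigma omega k := fst (XY theta sigma omega k).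
Definition Yk theta sigma omega k := snd (XY theta sigma omega k).

(* Main.v *)
Require Import Defs.
From Stdlib Require Import Reals Lra Lia Psatz.
Open Scope R_scope.

Lemma mact_eq a b c d x y : mact (Mat2 a b c d) (x,y) =
  (((a*x+b)*(c*x+d) + a*c*y*y)/((c*x+d)*(c*x+d)+(c*y)*(c*y)),
   (a*d-b*c)*y/((c*x+d)*(c*x+d)+(c*y)*(c*y))).
Proof. unfold mact; simpl. f_equal; f_equal; ring. Qed.

Lemma qpos a b c d x y : y > 0 -> a*d-b*c <> 0 -> (c*x+d)*(c*x+d)+(c*y)*(c*y) > 0.
Proof.
  intros Hy Hd. destruct (Req_dec c 0) as [->|Hc].
  - assert (d <> 0) by (intro; subst; apply Hd; ring).
    assert (d*d>0) by (generalize (Rlt_0_sqr d ltac:(auto)); unfold Rsqr; lra). nra.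
  - assert (c*y<>0) by (apply Rmult_integral_contrapositive; split; lra).
    assert ((c*y)*(c*y)>0).
    { generalize (Rlt_0_sqr (c*y) ltac:(auto)); unfold Rsqr; lra. }
    generalize (Rle_0_sqr (c*x+d)); unfold Rsqr; lra.
Qed.

Lemma mact_comp a b c d e f g h x y : y > 0 -> a*d-b*c > 0 -> e*h-f*g > 0 ->
  mact (mmul (Mat2 a b c d) (Mat2 e f g h)) (x,y) = mact (Mat2 a b c d) (mact (Mat2 e f g h) (x,y)).
Proof.
  intros Hy H1 H2. unfold mmul; cbn [ma mb mc md]. rewrite !mact_eq.
  assert (HqN := qpos e f g h x y Hy ltac:(lra)).
  assert (Hdet : (a*e+b*g)*(c*f+d*h)-(a*f+b*h)*(c*e+d*g) <> 0).
  { replace ((a*e+b*g)*(c*f+d*h)-(a*f+b*h)*(c*e+d*g)) with ((a*d-b*c)*(e*h-f*g)) by ring. nra. }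
  assert (HqMN := qpos _ _ _ _ x y Hy Hdet).
  set (qN := (g*x+h)*(g*x+h)+(g*y)*(g*y)) in *.
  assert (Hy1 : (e*h-f*g)*y/qN > 0) by (apply Rdiv_lt_0_compat; nra).
  assert (HqM := qpos a b c d (((e*x+f)*(g*x+h)+e*g*y*y)/qN) _ Hy1 ltac:(lra)).
  set (qMN := ((c * e + d * g) * x + (c * f + d * h)) *
    ((c * e + d * g) * x + (c * f + d * h)) +
    (c * e + d * g) * y * ((c * e + d * g) * y)) in *.
  assert (HK : (c * (((e * x + f) * (g * x + h) + e * g * y * y) / qN) + d) *
    (c * (((e * x + f) * (g * x + h) + e * g * y * y) / qN) + d) +
    c * ((e * h - f * g) * y / qN) * (c * ((e * h - f * g) * y / qN)) = qMN / qN).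
  { assert (Eq : qN = (g*x+h)*(g*x+h)+(g*y)*(g*y)) by reflexivity.
    unfold qMN. clearbody qN. field_simplify_eq; [subst qN; ring | lra]. }
  rewrite HK. assert (EqN : qN = (g*x+h)*(g*x+h)+(g*y)*(g*y)) by reflexivity.
  clearbody qN qMN. f_equal; field_simplify_eq; try (subst qN; ring); lra.
Qed.
Lemma inv_dist a b c d x y x' y' q q' :
  q = (c*x+d)*(c*x+d)+(c*y)*(c*y) -> q' = (c*x'+d)*(c*x'+d)+(c*y')*(c*y') ->
  q <> 0 -> q' <> 0 ->
  (((a*x'+b)*(c*x'+d) + a*c*y'*y')/q' - ((a*x+b)*(c*x+d) + a*c*y*y)/q)^2
  + ((a*d-b*c)*y'/q' - (a*d-b*c)*y/q)^2
  = (a*d-b*c)^2 * ((x-x')^2+(y-y')^2)/(q*q').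
Proof. intros Eq Eq' Hq Hq'. field_simplify_eq; auto. subst q q'. ring. Qed.

Lemma base X Y X' Y' : Y > 0 -> Y' > 0 ->
  4*(Y'*Y')*((X'-X)^2) <= 4*Y*Y'*((X'-X)^2+(Y'-Y)^2) + ((X'-X)^2+(Y'-Y)^2)^2.
Proof.
  intros. assert (E: 4*Y*Y'*((X'-X)^2+(Y'-Y)^2) + ((X'-X)^2+(Y'-Y)^2)^2 - 4*(Y'*Y')*((X'-X)^2)
   = ((X'-X)^2+(Y'-Y)^2 - 2*Y'*(Y'-Y))^2) by ring.
  generalize (pow2_ge_0 ((X'-X)^2+(Y'-Y)^2 - 2*Y'*(Y'-Y))). lra.
Qed.
Lemma Dval cs sn s q : cs*cs+sn*sn = 1 -> q = (-1*cs+(2*cs-s))*(-1*cs+(2*cs-s)) + (-1*sn)*(-1*sn) -> q <> 0 ->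
  (cs - ((0*cs+1)*(-1*cs+(2*cs-s)) + 0*(-1)*sn*sn)/q)^2 + (sn - (0*(2*cs-s) - 1*(-1))*sn/q)^2 = s^2/q.
Proof. intros H Eq Hq. assert (E2: q - 1 + 2*cs*s - s^2 = 0) by (rewrite Eq; nra). 
  field_simplify_eq; auto.
  apply Rminus_diag_uniq.
  replace (cs ^ 2 * q ^ 2 - 2 * cs ^ 2 * q + cs ^ 2 + 2 * cs * s * q - 2 * cs * s +
  s ^ 2 + sn ^ 2 * q ^ 2 - 2 * sn ^ 2 * q + sn ^ 2 - s ^ 2 * q) with
  ((cs*cs+sn*sn-1)*(q-1)^2 + (q-1)*(q - 1 + 2*cs*s - s^2)) by ring.
  rewrite E2, H. ring. Qed.
Lemma mdet_mul M N : mdet (mmul M N) = mdet M * mdet N.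
Proof. destruct M, N; unfold mdet, mmul; simpl; ring. Qed.

Lemma det_W lam sigma omega n : mdet (Wm lam sigma omega n) = 1.
Proof.
  induction n; simpl.
  - unfold mdet, mid; simpl; ring.
  - rewrite mdet_mul, IHn. unfold mdet, Tm; simpl; ring.
Qed.

Lemma minv1 a b c d : mdet (Mat2 a b c d) = 1 -> minv (Mat2 a b c d) = Mat2 d (-b) (-c) a.
Proof. intros H. unfold minv. rewrite H. simpl. f_equal; unfold Rdiv; rewrite Rinv_1; ring. Qed.

Lemma minv_mul T W : mdet T = 1 -> mdet W = 1 -> minv (mmul T W) = mmul (minv W) (minv T).
Proof.
  intros H1 H2. assert (H3 : mdet (mmul T W) = 1) by (rewrite mdet_mul, H1, H2; ring).
  destruct T as [a b c d], W as [e f g h].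
  rewrite (minv1 _ _ _ _ H1), (minv1 _ _ _ _ H2).
  unfold mmul at 1 in H3; unfold mmul at 1; simpl in H3 |- *.
  rewrite (minv1 _ _ _ _ H3). unfold mmul; simpl. f_equal; ring.
Qed.

Lemma finish X Y X' Y' y y' D R : Y > 0 -> Y' > 0 -> y > 0 -> y' > 0 -> 0 <= R ->
  (X'-X)^2+(Y'-Y)^2 = D*(Y*Y')/(y*y') ->
  4*y*y'*D + D^2 <= 4*(y*y')^2*R^2 ->
  Rabs (X'-X) / Y <= R.
Proof.
  intros HY HY' Hy Hy' HR HD HB.
  assert (Hb : 4*(Y'*Y')*((X'-X)^2) <= 4*Y*Y'*((X'-X)^2+(Y'-Y)^2) + ((X'-X)^2+(Y'-Y)^2)^2).
  { assert (E: 4*Y*Y'*((X'-X)^2+(Y'-Y)^2) + ((X'-X)^2+(Y'-Y)^2)^2 - 4*(Y'*Y')*((X'-X)^2)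
     = ((X'-X)^2+(Y'-Y)^2 - 2*Y'*(Y'-Y))^2) by ring.
    generalize (pow2_ge_0 ((X'-X)^2+(Y'-Y)^2 - 2*Y'*(Y'-Y))). lra. }
  rewrite HD in Hb.
  assert (E2 : 4*Y*Y'*(D*(Y*Y')/(y*y')) + (D*(Y*Y')/(y*y'))^2
     = (Y*Y'/(y*y'))^2 * (4*y*y'*D + D^2)) by (field; lra).
  rewrite E2 in Hb.
  assert (Hk : 0 < (Y*Y'/(y*y'))^2).
  { apply pow_lt. apply Rdiv_lt_0_compat; nra. }
  assert (Hsq : (X'-X)^2 <= (R*Y)^2).
  { assert (4*(Y'*Y')*((X'-X)^2) <= (Y*Y'/(y*y'))^2 * (4*(y*y')^2*R^2)).
    { apply Rle_trans with (1 := Hb). apply Rmult_le_compat_l; lra. }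
    replace ((Y*Y'/(y*y'))^2 * (4*(y*y')^2*R^2)) with (4*(Y'*Y')*((R*Y)^2)) in H
      by (field; lra).
    assert (0 < 4*(Y'*Y')) by nra.
    apply Rmult_le_reg_l with (4*(Y'*Y')); lra. }
  apply Rmult_le_reg_r with Y; [lra|]. unfold Rdiv.
  rewrite Rmult_assoc, Rinv_l, Rmult_1_r by lra.
  rewrite <- (Rabs_pos_eq (R*Y)) by nra.
  apply (Rsqr_le_abs_0 (X'-X) (R*Y)). unfold Rsqr. simpl in Hsq. lra.
Qed.

Lemma minvT l : minv (Mat2 l (-1) 1 0) = Mat2 0 1 (-1) l.
Proof. rewrite minv1. f_equal; ring. unfold mdet; simpl; ring. Qed.

Theorem mainTheorem4 (theta sigma c0 : R) (omega : nat -> R)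
  (Htheta : 0 < theta < PI) (Hsigma : 0 <= sigma <= 1) (Hc0 : 1 <= c0)
  (Homega : forall i : nat, (1 <= i)%nat -> Rabs (omega i) <= c0) :
  forall k : nat,
    Rabs (Xk theta sigma omega (S k) - Xk theta sigma omega k)
      / Yk theta sigma omega k
    <= sqrt 5 / 2 * (sigma * c0 ^ 2 / (sin theta) ^ 2).
Proof.
  intros k.
  assert (Hsn : 0 < sin theta) by (apply sin_gt_0; lra).
  assert (Hcs : cos theta * cos theta + sin theta * sin theta = 1)
    by (generalize (sin2_cos2 theta); unfold Rsqr; lra).
  assert (Hom : Rabs (omega (S k)) <= c0) by (apply Homega; lia).
  unfold Xk, Yk, XY.
  change (Wm (2 * cos theta) sigma omega (S k)) with
    (mmul (Tm (2 * cos theta) sigma omega (S k)) (Wm (2 * cos theta) sigma omega k)).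
  rewrite minv_mul by (apply det_W || (unfold mdet, Tm; simpl; ring)).
  generalize (det_W (2 * cos theta) sigma omega k).
  destruct (Wm (2 * cos theta) sigma omega k) as [a b c d]. intro HW.
  rewrite (minv1 _ _ _ _ HW). unfold Tm. rewrite minvT.
  unfold mdet in HW; simpl in HW.
  rewrite mact_comp by (lra || nra).
  set (s := sigma * omega (S k)).
  rewrite (mact_eq 0 1 (-1)).
  set (cs := cos theta) in *. set (sn := sin theta) in *.
  set (q0 := (-1 * cs + (2 * cs - s)) * (-1 * cs + (2 * cs - s)) + -1 * sn * (-1 * sn)).
  set (x' := ((0 * cs + 1) * (-1 * cs + (2 * cs - s)) + 0 * -1 * sn * sn) / q0).
  set (y' := (0 * (2 * cs - s) - 1 * -1) * sn / q0).
  assert (Hq0 : q0 > 0) by (apply (qpos 0 1 (-1) (2*cs - s) cs sn); lra).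
  assert (Hy' : y' > 0) by (unfold y'; apply Rdiv_lt_0_compat; lra).
  rewrite !mact_eq. cbn [fst snd].
  assert (HD1 : d * a - - b * - c <> 0) by lra.
  assert (Hq1 := qpos d (-b) (-c) a cs sn Hsn HD1).
  assert (Hq2 := qpos d (-b) (-c) a x' y' Hy' HD1).
  assert (Hdet : d * a - - b * - c = 1) by lra.
  assert (HDv : (cs - x')^2 + (sn - y')^2 = s^2/q0).
  { unfold x', y'. apply Dval; [exact Hcs | reflexivity | lra]. }
  apply finish with (y := sn) (y' := y') (D := (cs - x')^2 + (sn - y')^2)
    (Y' := (d*a - -b * -c)*y'/((-c*x'+a)*(-c*x'+a)+(-c*y')*(-c*y'))).
  - rewrite Hdet. apply Rdiv_lt_0_compat; lra.
  - rewrite Hdet. apply Rdiv_lt_0_compat; lra.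
  - lra.
  - lra.
  - apply Rmult_le_pos. apply Rmult_le_pos; [apply sqrt_pos | lra].
    apply Rmult_le_pos. apply Rmult_le_pos; [lra | apply pow_le; lra].
    apply Rlt_le, Rinv_0_lt_compat, pow_lt; lra.
  - rewrite (inv_dist d (-b) (-c) a cs sn x' y' _ _ eq_refl eq_refl) by lra.
    rewrite Hdet. field. split; lra.
  - rewrite HDv. unfold y'.
    assert (Hs2 : s^2 <= sigma^2 * c0^2).
    { unfold s. assert (omega (S k) ^2 <= c0^2).
      { generalize (Rabs_pos (omega (S k))); intro.
        rewrite <- (pow2_abs (omega (S k))). apply pow_incr. lra. }
      rewrite Rpow_mult_distr. apply Rmult_le_compat_l; [nra|lra]. }
    assert (Hsn1 : sn^2 <= 1) by nra.
    assert (Hsq5 : sqrt 5 * sqrt 5 = 5) by (apply sqrt_sqrt; lra).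
    replace (4 * sn * ((0 * (2 * cs - s) - 1 * -1) * sn / q0) * (s ^ 2 / q0) + (s ^ 2 / q0) ^ 2)
      with ((4*sn^2*s^2 + s^4) / q0^2) by (field; lra).
    replace (4 * (sn * ((0 * (2 * cs - s) - 1 * -1) * sn / q0)) ^ 2 *
      (sqrt 5 / 2 * (sigma * c0 ^ 2 / sn ^ 2)) ^ 2) with
      ((sqrt 5 * sqrt 5) * sigma^2 * c0^4 / q0^2) by (field; lra).
    rewrite Hsq5. unfold Rdiv. apply Rmult_le_compat_r.
    { apply Rlt_le, Rinv_0_lt_compat, pow_lt; lra. }
    assert (Hs2' : 0 <= s^2) by apply pow2_ge_0.
    assert (Hc2 : 1 <= c0^2) by nra.
    assert (Hsg : sigma^2 <= 1) by nra.
    assert (4*sn^2*s^2 <= 4*sigma^2*c0^4) by nra.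
    assert (s^4 <= sigma^2*c0^4).
    { replace (s^4) with (s^2*s^2) by ring.
      apply Rle_trans with ((sigma^2*c0^2)*(sigma^2*c0^2)).
      apply Rmult_le_compat; lra. nra. }
    lra.
Qed.
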